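(* For any complex numbers $a,b,\alpha,\beta$ with $\beta a-\alpha b\neq0$ and any natural number $n\ge1$, \[ \sum_{r=0}^{\lfloor n/2\rfloor}\Psi\left(\begin{array}{cc|c} a & b & n \\ \alpha & \beta & r \end{array}\right)(-1)^r=\Psi(a+\alpha,b+\beta,n),\qquad \sum_{r=0}^{\lfloor (n-1)/2\rfloor}\Phi\left(\begin{array}{cc|c} a & b & n \\ \alpha & \beta & r \end{array}\right)(-1)^r=\Phi(a+\alpha,b+\beta,n). \]
   Context: $\delta(m)=1$ for $m$ odd, $0$ for $m$ even; $\lfloor\cdot\rfloor$ is the floor. $\Psi(a,b,n)$, $\Phi(a,b,n)$ are defined by $\Psi(a,b,0)=2$, $\Psi(a,b,1)=1$, $\Psi(a,b,n+1)=(2a-b)^{\delta(n)}\Psi(a,b,n)-a\Psi(a,b,n-1)$ and $\Phi(a,b,0)=0$, $\Phi(a,b,1)=1$, $\Phi(a,b,n+1)=(2a-b)^{\delta(n+1)}\Phi(a,b,n)-a\Phi(a,b,n-1)$. For $n\ge1$ and numbers with $\beta a-\alpha b\ne0$, $\Psi\left(\begin{array}{cc|c} a & b & n \\ \alpha & \beta & r \end{array}\right)$ ($0\le r\le\lfloor n/2\rfloor$) and $\Phi\left(\begin{array}{cc|c} a & b & n \\ \alpha & \beta & r \end{array}\right)$ ($0\le r\le\lfloor (n-1)/2\rfloor$) are the unique numbers such that, identically in $x,y$, $(\beta a-\alpha b)^{\lfloor n/2\rfloor}\frac{x^n+y^n}{(x+y)^{\delta(n)}}=\sum_{r}\Psi\left(\begin{array}{cc|c}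 a & b & n \\ \alpha & \beta & r \end{array}\right)(\alpha x^2+\beta xy+\alpha y^2)^{\lfloor n/2\rfloor-r}(ax^2+bxy+ay^2)^r$ and $(\beta a-\alpha b)^{\lfloor (n-1)/2\rfloor}\frac{x^n-y^n}{(x-y)(x+y)^{\delta(n-1)}}=\sum_{r}\Phi\left(\begin{array}{cc|c} a & b & n \\ \alpha & \beta & r \end{array}\right)(\alpha x^2+\beta xy+\alpha y^2)^{\lfloor (n-1)/2\rfloor-r}(ax^2+bxy+ay^2)^r$. *)

(* Defs.v *)
From HB Require Import structures.
From mathcomp Require Import all_boot all_order all_algebra.
From mathcomp Require Import reals.
From mathcomp Require Import complex.
Set Implicit Arguments. Unset Strict Implicit. Unset Printing Implicit Defensive.
Import Order.TTheory GRing.Theory Num.Theory.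
Local Open Scope ring_scope.

Section Defs.
Variable F : comRingType.

Definition delta (m : nat) : nat := odd m.

Fixpoint Psi (a b : F) (n : nat) {struct n} : F :=
  match n with
  | 0 => 2
  | 1 => 1
  | (m.+1 as k).+1 => (2 * a - b) ^+ delta k * Psi a b k - a * Psi a b m
  end.

Fixpoint Phi (a b : F) (n : nat) {struct n} : F :=
  match n with
  | 0 => 0
  | 1 => 1
  | (m.+1 as k).+1 => (2 * a - b) ^+ delta k.+1 * Phi a b k - a * Phi a b m
  end.
End Defs.

Section Coefs.
Variable F : fieldType.

(* c : nat -> F is the family Psi(a b n | al be r), 0 <= r <= n/2, iff
   identically in x, y:
   (be a - al b)^(n/2) (x^n+y^n)/(x+y)^delta(n)
     = sum_r c r (al x^2 + be x y + al y^2)^(n/2 - r) (a x^2 + b x y + a y^2)^r *)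
Definition is_Psi_coefs (a b al be : F) (n : nat) (c : nat -> F) : Prop :=
  forall x y : F, (x + y) ^+ delta n != 0 ->
    (be * a - al * b) ^+ n./2 * ((x ^+ n + y ^+ n) / (x + y) ^+ delta n)
    = \sum_(0 <= r < n./2.+1)
        c r * (al * x ^+ 2 + be * x * y + al * y ^+ 2) ^+ (n./2 - r)
            * (a * x ^+ 2 + b * x * y + a * y ^+ 2) ^+ r.

(* same for Phi(a b n | al be r), 0 <= r <= (n-1)/2 *)
Definition is_Phi_coefs (a b al be : F) (n : nat) (c : nat -> F) : Prop :=
  forall x y : F, (x - y) * (x + y) ^+ delta n.-1 != 0 ->
    (be * a - al * b) ^+ (n.-1)./2
      * ((x ^+ n - y ^+ n) / ((x - y) * (x + y) ^+ delta n.-1))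
    = \sum_(0 <= r < (n.-1)./2.+1)
        c r * (al * x ^+ 2 + be * x * y + al * y ^+ 2) ^+ ((n.-1)./2 - r)
            * (a * x ^+ 2 + b * x * y + a * y ^+ 2) ^+ r.
End Coefs.

(* Main.v *)
Require Import Defs.
From HB Require Import structures.
From mathcomp Require Import all_boot all_order all_algebra.
From mathcomp Require Import reals complex.
From mathcomp Require Import ring.
Import Order.TTheory GRing.Theory Num.Theory.
Local Open Scope ring_scope.

Lemma PsiSS (F : comRingType) (a b : F) k :
  Psi a b k.+2 = (2 * a - b) ^+ delta k.+1 * Psi a b k.+1 - a * Psi a b k.
Proof. by []. Qed.
Lemma PhiSS (F : comRingType) (a b : F) k :
  Phi a b k.+2 = (2 * a - b) ^+ delta k.+2 * Phi a b k.+1 - a * Phi a b k.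
Proof. by []. Qed.

Lemma half_SS k : (k.+2)./2 = (k./2).+1. Proof. by []. Qed.
Lemma half_S k : (k.+1)./2 = (odd k + k./2)%N. Proof. by rewrite -uphalf_half. Qed.

Lemma Psi_hom (F : comRingType) (l a b : F) n :
  Psi (l * a) (l * b) n = l ^+ n./2 * Psi a b n.
Proof.
suff: Psi (l * a) (l * b) n = l ^+ n./2 * Psi a b n /\
      Psi (l * a) (l * b) n.+1 = l ^+ n.+1./2 * Psi a b n.+1 by case.
elim: n => [|k [IH1 IH2]]; first by rewrite /= !expr0 !mul1r.
split => //.
rewrite !PsiSS IH1 IH2 half_SS half_S /delta oddS.
move: (Psi a b k) (Psi a b k.+1) => x y.
case: (odd k) => /=; rewrite ?add0n ?add1n !exprS ?expr1 ?expr0; ring.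
Qed.

Lemma Phi_hom (F : comRingType) (l a b : F) n :
  Phi (l * a) (l * b) n = l ^+ (n.-1)./2 * Phi a b n.
Proof.
suff: Phi (l * a) (l * b) n = l ^+ (n.-1)./2 * Phi a b n /\
      Phi (l * a) (l * b) n.+1 = l ^+ n./2 * Phi a b n.+1 by case.
elim: n => [|k [IH1 IH2]]; first by rewrite /= !expr0 !mulr1 ?mulr0.
split => //.
rewrite !PhiSS IH1 IH2 /delta !oddS.
case: k IH1 IH2 => [|k] IH1 IH2.
  by rewrite /=; ring.
move: (Phi a b k.+1) (Phi a b k.+2) => x y.
rewrite /= uphalf_half !negbK.
case: (odd k) => /=; rewrite ?add0n ?add1n !exprS ?expr1 ?expr0; ring.
Qed.

Lemma Psi_lucas (F : comRingType) (t : F) n :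
  Psi t (-(1 + t ^+ 2)) n * (1 + t) ^+ delta n = 1 + t ^+ n.
Proof.
suff: Psi t (-(1 + t ^+ 2)) n * (1 + t) ^+ delta n = 1 + t ^+ n /\
      Psi t (-(1 + t ^+ 2)) n.+1 * (1 + t) ^+ delta n.+1 = 1 + t ^+ n.+1 by case.
elim: n => [|k [IH1 IH2]]; first by split; rewrite /= ?expr0 ?expr1; ring.
split => //.
rewrite PsiSS.
move: IH1 IH2; move: (Psi t _ k) (Psi t _ k.+1) => x y.
rewrite /delta /=.
case: (odd k) => /= IH1 IH2; rewrite ?expr0 ?expr1 ?mulr1 in IH1 IH2 *.
- rewrite mul1r mulrBl IH2 -mulrA IH1 !exprS; ring.
- have -> : (2 * t - - (1 + t ^+ 2)) * y = (1 + t) * (y * (1 + t)) by ring.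
  rewrite IH1 IH2 !exprS; ring.
Qed.

Lemma Phi_lucas (F : comRingType) (t : F) n :
  Phi t (-(1 + t ^+ 2)) n * ((1 - t) * (1 + t) ^+ delta n.-1) = 1 - t ^+ n.
Proof.
suff: Phi t (-(1 + t ^+ 2)) n * ((1 - t) * (1 + t) ^+ delta n.-1) = 1 - t ^+ n /\
      Phi t (-(1 + t ^+ 2)) n.+1 * ((1 - t) * (1 + t) ^+ delta n) = 1 - t ^+ n.+1 by case.
elim: n => [|k [IH1 IH2]]; first by split; rewrite /= ?expr0 ?expr1; ring.
split => //.
rewrite PhiSS.
case: k IH1 IH2 => [|k] IH1 IH2.
  by rewrite /= !expr0 ?expr1; ring.
move: IH1 IH2; move: (Phi t _ k.+1) (Phi t _ k.+2) => x y.
rewrite /delta /=.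
case: (odd k) => /= IH1 IH2; rewrite ?expr0 ?expr1 ?mulr1 in IH1 IH2 *.
- have -> : (1 * y - t * x) * ((1 - t) * (1 + t)) =
    (y * (1 - t)) * (1 + t) - t * (x * ((1 - t) * (1 + t))) by ring.
  rewrite IH1 IH2 !exprS; ring.
- have -> : ((2 * t - - (1 + t ^+ 2)) * y - t * x) * (1 - t) =
    (1 + t) * (y * ((1 - t) * (1 + t))) - t * (x * (1 - t)) by ring.
  rewrite IH1 IH2 !exprS; ring.
Qed.

Lemma horner_Psi (F : comRingType) (p q : {poly F}) x n :
  (Psi p q n).[x] = Psi p.[x] q.[x] n.
Proof.
suff: (Psi p q n).[x] = Psi p.[x] q.[x] n /\
      (Psi p q n.+1).[x] = Psi p.[x] q.[x] n.+1 by case.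
elim: n => [|k [IH1 IH2]]; first by split => /=; rewrite ?hornerE.
split => //.
by rewrite !PsiSS hornerD hornerN !hornerM horner_exp IH1 IH2 ?hornerE.
Qed.

Lemma horner_Phi (F : comRingType) (p q : {poly F}) x n :
  (Phi p q n).[x] = Phi p.[x] q.[x] n.
Proof.
suff: (Phi p q n).[x] = Phi p.[x] q.[x] n /\
      (Phi p q n.+1).[x] = Phi p.[x] q.[x] n.+1 by case.
elim: n => [|k [IH1 IH2]]; first by split => /=; rewrite ?hornerE.
split => //.
by rewrite !PhiSS hornerD hornerN !hornerM horner_exp IH1 IH2 ?hornerE.
Qed.

Lemma poly_zero (F : numDomainType) (p : {poly F}) :
  (forall k : nat, p.[(k + 2)%:R] = 0) -> p = 0.
Proof.
move=> H; apply/eqP; apply: contraT => pn0.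
have := max_poly_roots (rs := mkseq (fun i => (i + 2)%:R : F) (size p)) pn0.
rewrite size_mkseq ltnn; apply.
- by apply/allP => z /mapP [i _ ->]; apply/rootP.
- rewrite map_inj_uniq ?iota_uniq // => i j /eqP; rewrite eqr_nat => /eqP.
  by move/addIn.
Qed.

Lemma sum_neg (F : comRingType) (c : nat -> F) m u :
  \sum_(0 <= r < m.+1) c r * u ^+ (m - r) * (- u) ^+ r
  = u ^+ m * \sum_(0 <= r < m.+1) c r * (-1) ^+ r.
Proof.
rewrite big_distrr; apply: eq_big_nat => r /andP [_ hr].
have -> : u ^+ m = u ^+ (m - r) * u ^+ r by rewrite -exprD subnK // -ltnS.
rewrite [(- u) ^+ r]exprNn; move: (u ^+ (m - r)) (u ^+ r) ((-1) ^+ r : F) (c r) => A B C D /=; ring.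
Qed.

Lemma key_Psi (F : numFieldType) (a b al be : F) n c :
  is_Psi_coefs a b al be n c -> forall t,
  (be * a - al * b) ^+ n./2 * Psi t (-(1 + t ^+ 2)) n =
  \sum_(0 <= r < n./2.+1) c r * (al + be * t + al * t ^+ 2) ^+ (n./2 - r)
     * (a + b * t + a * t ^+ 2) ^+ r.
Proof.
move=> H t.
pose P : {poly F} := ((be * a - al * b) ^+ n./2)%:P * Psi 'X (-(1 + 'X ^+ 2)) n
  - \sum_(0 <= r < n./2.+1) (c r)%:P * (al%:P + be%:P * 'X + al%:P * 'X ^+ 2) ^+ (n./2 - r)
     * (a%:P + b%:P * 'X + a%:P * 'X ^+ 2) ^+ r.
have PE s : P.[s] = (be * a - al * b) ^+ n./2 * Psi s (-(1 + s ^+ 2)) n -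
  \sum_(0 <= r < n./2.+1) c r * (al + be * s + al * s ^+ 2) ^+ (n./2 - r)
     * (a + b * s + a * s ^+ 2) ^+ r.
  rewrite /P hornerD hornerN horner_sum hornerM hornerC horner_Psi.
  congr (_ * Psi _ _ _ - _); rewrite ?hornerE //.
  by apply: eq_bigr => r _; rewrite !hornerE.
have P0 : P = 0.
  apply: poly_zero => k; rewrite PE; apply/eqP; rewrite subr_eq0; apply/eqP.
  set s : F := (k + 2)%:R.
  have hs : (1 + s) ^+ delta n != 0.
    by rewrite expf_neq0 // /s nat1r pnatr_eq0.
  move: (H 1 s); rewrite !expr1n !mulr1 => /(_ hs) <-.
  by rewrite -(Psi_lucas _ s n) mulfK.
by apply/eqP; rewrite -subr_eq0 -PE P0 horner0.
Qed.

Lemma key_Phi (F : numFieldType) (a b al be : F) n c :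
  is_Phi_coefs a b al be n c -> forall t,
  (be * a - al * b) ^+ (n.-1)./2 * Phi t (-(1 + t ^+ 2)) n =
  \sum_(0 <= r < (n.-1)./2.+1) c r * (al + be * t + al * t ^+ 2) ^+ ((n.-1)./2 - r)
     * (a + b * t + a * t ^+ 2) ^+ r.
Proof.
move=> H t.
pose P : {poly F} := ((be * a - al * b) ^+ (n.-1)./2)%:P * Phi 'X (-(1 + 'X ^+ 2)) n
  - \sum_(0 <= r < (n.-1)./2.+1) (c r)%:P * (al%:P + be%:P * 'X + al%:P * 'X ^+ 2) ^+ ((n.-1)./2 - r)
     * (a%:P + b%:P * 'X + a%:P * 'X ^+ 2) ^+ r.
have PE s : P.[s] = (be * a - al * b) ^+ (n.-1)./2 * Phi s (-(1 + s ^+ 2)) n -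
  \sum_(0 <= r < (n.-1)./2.+1) c r * (al + be * s + al * s ^+ 2) ^+ ((n.-1)./2 - r)
     * (a + b * s + a * s ^+ 2) ^+ r.
  rewrite /P hornerD hornerN horner_sum hornerM hornerC horner_Phi.
  congr (_ * Phi _ _ _ - _); rewrite ?hornerE //.
  by apply: eq_bigr => r _; rewrite !hornerE.
have P0 : P = 0.
  apply: poly_zero => k; rewrite PE; apply/eqP; rewrite subr_eq0; apply/eqP.
  set s : F := (k + 2)%:R.
  have hs : (1 - s) * (1 + s) ^+ delta n.-1 != 0.
    rewrite mulf_neq0 // ?expf_neq0 // /s ?nat1r ?pnatr_eq0 //.
    by rewrite subr_eq0 eq_sym pnatr_eq1 addn2.
  move: (H 1 s); rewrite !expr1n !mulr1 => /(_ hs) <-.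
  by rewrite -(Phi_lucas _ s n) mulfK.
by apply/eqP; rewrite -subr_eq0 -PE P0 horner0.
Qed.

Lemma main_gen (F : numClosedFieldType) (a b al be : F) (n : nat)
    (cPsi cPhi : nat -> F) :
  be * a - al * b != 0 -> (1 <= n)%N ->
  is_Psi_coefs a b al be n cPsi ->
  is_Phi_coefs a b al be n cPhi ->
  \sum_(0 <= r < n./2.+1) cPsi r * (-1) ^+ r = Psi (a + al) (b + be) n /\
  \sum_(0 <= r < (n.-1)./2.+1) cPhi r * (-1) ^+ r = Phi (a + al) (b + be) n.
Proof.
move=> HD Hn HPsi HPhi.
have KPsi := @key_Psi _ _ _ _ _ _ _ HPsi; have KPhi := @key_Phi _ _ _ _ _ _ _ HPhi.
have z2 : (0 : F) ^+ 2 = 0 by rewrite expr2 mulr0.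
have z1 : (0 : F) ^+ n = 0 by rewrite expr0n eqn0Ngt Hn.
case: (eqVneq (a + al) 0) => HA.
- have ha : a = - al by apply/eqP; rewrite -addr_eq0 HA.
  have hD : be * a - al * b = al * (- (b + be)) by rewrite ha; ring.
  have hal : al != 0 by apply: contraNneq HD; rewrite hD => ->; rewrite mul0r.
  have hom1 := Psi_hom _ (- (b + be)) 0 (- (1 + 0 ^+ 2)) n.
  have hom2 := Phi_hom _ (- (b + be)) 0 (- (1 + 0 ^+ 2)) n.
  rewrite mulr0 z2 addr0 mulrN1 opprK in hom1 hom2.
  have P1 : Psi 0 (- (1 + 0 ^+ 2)) n = 1 :> F.
    by move: (Psi_lucas _ (0 : F) n); rewrite addr0 expr1n mulr1 z1 addr0.
  have P2 : Phi 0 (- (1 + 0 ^+ 2)) n = 1 :> F.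
    by move: (Phi_lucas _ (0 : F) n); rewrite addr0 subr0 expr1n !mulr1 z1 subr0.
  rewrite z2 addr0 in P1 P2.
  rewrite HA hom1 hom2 P1 P2 !mulr1.
  move: (KPsi 0) (KPhi 0); rewrite hD z2 !mulr0 !addr0 ha !sum_neg P1 P2 !mulr1 !exprMn.
  move=> E1 E2; split.
  + by apply: (mulfI (expf_neq0 n./2 hal)); rewrite -E1.
  + by apply: (mulfI (expf_neq0 (n.-1)./2 hal)); rewrite -E2.
- set A := a + al in HA *; set B := b + be.
  have [t ht] := @solve_monicpoly F 2 (fun i => if i == 0%N then -1 else - (B / A)) isT.
  rewrite big_ord_recr big_ord1 /= expr0 expr1 in ht.
  have ht2 : A * (1 + t ^+ 2) = - (B * t) by rewrite ht; field.
  have t0 : t != 0.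
    by apply: contra_neq HA => t0; move: ht2; rewrite t0 z2 addr0 mulr1 mulr0 oppr0.
  have hq2 : a + b * t + a * t ^+ 2 = - (al + be * t + al * t ^+ 2).
    apply/eqP; rewrite -addr_eq0; apply/eqP.
    transitivity (A * (1 + t ^+ 2) + B * t); first by rewrite /A /B; ring.
    by rewrite ht2 addNr.
  have hq1 : al + be * t + al * t ^+ 2 = t * (be * a - al * b) / A.
    apply: (mulfI HA); rewrite [A * (_ / A)]mulrC divfK //.
    transitivity (al * (A * (1 + t ^+ 2)) + A * be * t); first by rewrite /A; ring.
    by rewrite ht2 /A /B; ring.
  have hl : t / A * B = - (1 + t ^+ 2).
    by apply: (mulfI HA); rewrite mulrN ht2 opprK mulrA [A * (_ / A)]mulrC divfK // mulrC.
  have hom1 := Psi_hom _ (t / A) A B n.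
  have hom2 := Phi_hom _ (t / A) A B n.
  rewrite divfK // hl in hom1 hom2.
  move: (KPsi t) (KPhi t); rewrite hq2 !sum_neg hq1 hom1 hom2 => E1 E2.
  have nz k : (t * (be * a - al * b) / A) ^+ k != 0.
    by rewrite expf_neq0 // mulf_neq0 ?invr_eq0 // mulf_neq0.
  split.
  + apply: (mulfI (nz n./2)); rewrite -E1 !exprMn exprVn; ring.
  + apply: (mulfI (nz (n.-1)./2)); rewrite -E2 !exprMn exprVn; ring.
Qed.

Local Open Scope complex_scope.

Theorem theorem10p4 (R : realType) (a b al be : R[i]) (n : nat)
    (cPsi cPhi : nat -> R[i]) :
  be * a - al * b != 0 -> (1 <= n)%N ->
  is_Psi_coefs a b al be n cPsi ->
  is_Phi_coefs a b al be n cPhi ->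
  \sum_(0 <= r < n./2.+1) cPsi r * (-1) ^+ r = Psi (a + al) (b + be) n /\
  \sum_(0 <= r < (n.-1)./2.+1) cPhi r * (-1) ^+ r = Phi (a + al) (b + be) n.
Proof. exact: main_gen. Qed.
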